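(* Let $1\leq a\leq n$ be integers and let $p(n)$ denote the number of partitions of $n$ (the number of integer sequences $\lambda_1\geq\lambda_2\geq\dots\geq\lambda_k\geq 1$ with $\sum_{i=1}^k\lambda_i=n$). There exists a family $\mathcal{S}\subseteq 2^{[n]}$ of subsets of $[n]=\{1,\dots,n\}$ with $|\mathcal{S}|\leq p(n)\,a\,(n/a+1)^a$ such that the poset $(\mathcal{S},\subseteq)$ contains every $n$-element poset that does not have an antichain of size $a+1$.
   Context: A poset $(U,\leq)$ contains a poset $(P,\preceq)$ if there is a subset $P'\subseteq U$ such that $(P',\leq)$ (the restriction of $\leq$ to $P'$) is isomorphic to $(P,\preceq)$; i.e. containment is as an induced subposet. An antichain is a set of pairwise incomparable elements. *)

(* Defs.v *)
From mathcomp Require Import all_boot all_order all_algebra.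
Set Implicit Arguments. Unset Strict Implicit. Unset Printing Implicit Defensive.

(* A partition with k parts has k <= n and all parts <= n, so we count
   k.-tuples with entries in 'I_n.+1 for each k <= n. *)
Definition is_partition (n : nat) (s : seq nat) : bool :=
  [&& sorted geq s, all (fun x => 0 < x) s & sumn s == n].

Definition partition_count (n : nat) : nat :=
  \sum_(k < n.+1)
     #|[set t : k.-tuple 'I_n.+1 | is_partition n (map val t)]|.

(* A partial order on 'I_n (every n-element poset is isomorphic to one). *)
Definition is_poset (n : nat) (r : rel 'I_n) : Prop :=
  reflexive r /\ antisymmetric r /\ transitive r.

Definition is_antichain (n : nat) (r : rel 'I_n) (A : {set 'I_n}) : Prop :=
  forall x y, x \in A -> y \in A -> x != y -> ~~ r x y /\ ~~ r y x.

Definition contains_poset (n m : nat) (S : {set {set 'I_m}}) (r : rel 'I_n)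
  : Prop :=
  exists f : 'I_n -> {set 'I_m},
    [/\ injective f, forall i, f i \in S &
        forall i j, r i j = (f i \subset f j)].

(* Main.v *)
Require Import Defs.
From mathcomp Require Import all_boot all_order all_algebra zify perm.
Set Implicit Arguments. Unset Strict Implicit. Unset Printing Implicit Defensive.

Definition antib n (r : rel 'I_n) (A : {set 'I_n}) :=
  [forall x in A, forall y in A, (x != y) ==> ~~ r x y].

Lemma antibP n (r : rel 'I_n) (A : {set 'I_n}) :
  reflect (forall x y, x \in A -> y \in A -> x != y -> ~~ r x y) (antib r A).
Proof.
apply: (iffP forallP) => [H x y xA yA nxy | H x].
  by move: (H x); rewrite xA /= => /forallP/(_ y); rewrite yA nxy.
by apply/implyP => xA; apply/forallP => y; apply/implyP => yA; apply/implyP; apply: H.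
Qed.

Lemma maxelt n (r : rel 'I_n) : reflexive r -> antisymmetric r -> transitive r ->
  forall X : {set 'I_n}, X != set0 ->
  exists2 a, a \in X & forall y, y \in X -> r a y -> y = a.
Proof.
move=> rr ra rt X /set0Pn [x0 x0X].
case: (arg_maxnP (fun x => #|[set y in X | r y x]|) x0X) => a aX amax.
exists a => // y yX ray; apply/eqP; apply/negPn/negP => nya.
have := amax y yX; apply/negP; rewrite -ltnNge; apply: proper_card.
apply/properP; split.
  by apply/subsetP => z; rewrite !inE => /andP[-> rza] /=; apply: rt ray.
exists y; first by rewrite inE yX /= rr.
rewrite inE yX /=; apply/negP => rya; case/negP: nya; apply/eqP; apply: ra; by rewrite ray rya.
Qed.

Lemma chaintop n (r : rel 'I_n) : reflexive r -> antisymmetric r -> transitive r ->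
  forall C : {set 'I_n}, C != set0 ->
  (forall x y, x \in C -> y \in C -> r x y || r y x) ->
  exists2 t, t \in C & forall z, z \in C -> r z t.
Proof.
move=> rr ra rt C Cn0 Cc; have [t tC tmax] := maxelt rr ra rt Cn0.
exists t => // z zC; case/orP: (Cc z t zC tC) => // rtz.
by rewrite (tmax z zC rtz) rr.
Qed.

Lemma dilworth n (r : rel 'I_n) : reflexive r -> antisymmetric r -> transitive r ->
  forall N (X : {set 'I_n}), #|X| <= N -> forall m,
  (forall A : {set 'I_n}, A \subset X -> antib r A -> #|A| <= m) ->
  exists f : 'I_n -> nat, (forall x, x \in X -> f x < m) /\
     (forall x y, x \in X -> y \in X -> f x = f y -> r x y || r y x).
Proof.
move=> rr ra rt; elim=> [|N IH] X hX m hA.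
  exists (fun _ => 0); move: hX; rewrite leqn0 cards_eq0 => /eqP ->.
  by split=> x; rewrite inE.
case: (eqVneq X set0) => [-> | Xn0].
  by exists (fun _ => 0); split => x; rewrite inE.
have [a aX amax] := maxelt rr ra rt Xn0.
set X' := X :\ a.
have X'X : X' \subset X by apply: subsetDl.
have cX' : #|X'| <= N.
  rewrite -ltnS; apply: leq_trans hX; apply: proper_card; apply/properP.
  by split=> //; exists a => //; rewrite !inE eqxx.
pose P := fun A : {set 'I_n} => (A \subset X') && antib r A.
have P0 : P set0.
  by rewrite /P sub0set; apply/antibP => x y; rewrite inE.
case: (arg_maxnP (fun A : {set 'I_n} => #|A|) P0) => A0 /andP[A0X' A0a] A0max.
set k := #|A0|.
have km : k <= m by apply: hA => //; apply: subset_trans X'X.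
have A0m : forall A : {set 'I_n}, A \subset X' -> antib r A -> #|A| <= k.
  by move=> A AX Aa; apply: (A0max A); rewrite /P AX Aa.
have [g [gk gc]] := IH X' cX' k A0m.
have hit : forall A : {set 'I_n}, A \subset X' -> antib r A -> #|A| = k ->
    forall i, i < k -> exists2 z, z \in A & g z = i.
  move=> A AX' Aa Ak i ik.
  have U : uniq (map g (enum A)).
    rewrite map_inj_in_uniq ?enum_uniq // => x y; rewrite !mem_enum => xA yA gxy.
    apply/eqP; apply/negPn/negP => nxy.
    have xX := subsetP AX' x xA; have yX := subsetP AX' y yA.
    move/antibP: Aa => Aa.
    have := gc x y xX yX gxy.
    by rewrite (negbTE (Aa x y xA yA nxy)) (negbTE (Aa y x yA xA _)) // eq_sym.
  have sub : {subset map g (enum A) <= iota 0 k}.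
    move=> j /mapP [z]; rewrite mem_enum => zA ->; rewrite mem_iota add0n /=.
    exact: gk (subsetP AX' z zA).
  have sz : size (iota 0 k) <= size (map g (enum A)).
    by rewrite size_iota size_map -cardE Ak.
  have [_ eqi] := uniq_min_size U sub sz.
  have : i \in map g (enum A) by rewrite eqi mem_iota.
  by case/mapP => z; rewrite mem_enum => zA ->; exists z.
pose MA := fun A : {set 'I_n} => [&& A \subset X', antib r A & #|A| == k].
pose M := fun i : nat => [set z in X' | (g z == i) && [exists A, MA A && (z \in A)]].
have Minv : forall i z, z \in M i -> [/\ z \in X', g z = i &
    exists2 A, MA A & z \in A].
  move=> i z; rewrite in_set => /and3P[zX /eqP gz /existsP [A /andP[MAA zA]]].
  by split=> //; exists A.
have Mtop : forall i, i < k -> exists2 t, t \in M i & forall z, z \in M i -> r z t.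
  move=> i ik; apply: chaintop => //.
    have [z zA gz] := hit A0 A0X' A0a erefl i ik.
    apply/set0Pn; exists z; rewrite in_set (subsetP A0X' z zA) gz eqxx /=.
    by apply/existsP; exists A0; rewrite zA /MA A0X' A0a eqxx.
  move=> x y /Minv [xX gx _] /Minv [yX gy _].
  by apply: gc => //; rewrite gx gy.
pose xs := fun i => odflt a [pick t | (t \in M i) && [forall z, (z \in M i) ==> r z t]].
have xsP : forall i, i < k -> xs i \in M i /\ forall z, z \in M i -> r z (xs i).
  move=> i ik; rewrite /xs; case: pickP => [t /andP[tM /forallP tt] | none] /=.
    by split=> // z zM; exact: (implyP (tt z) zM).
  have [t tM tt] := Mtop i ik; have := none t; rewrite tM /=; move/negP; case.
  by apply/forallP => z; apply/implyP; exact: tt.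
have [[i ik rxa] | nocase] : (exists2 i, i < k & r (xs i) a) \/
    (forall i, i < k -> ~~ r (xs i) a).
  case: (boolP [exists i : 'I_k, r (xs i) a]) => [/existsP [i ri] | /existsPn H].
    by left; exists i.
  by right => i ik; exact: (H (Ordinal ik)).
- pose K := a |: [set z in X' | (g z == i) && r z (xs i)].
  pose Y := X :\: K.
  have aK : a \in K by rewrite setU11.
  have cY : #|Y| <= N.
    rewrite -ltnS; apply: leq_trans hX; apply: proper_card; apply/properP.
    split; first exact: subsetDl.
    by exists a => //; rewrite inE aK.
  have Kinv : forall z, z \in K -> z = a \/ [/\ z \in X', g z = i & r z (xs i)].
    move=> z; rewrite in_setU1 => /orP [/eqP -> | ]; first by left.
    by rewrite in_set => /and3P [zX /eqP gz rz]; right.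
  have YX' : forall z, z \in Y -> z \in X'.
    move=> z; rewrite in_setD => /andP [zK zX]; rewrite in_setD1 zX andbT.
    by apply/eqP => za; move: zK; rewrite za aK.
  have k0 : 0 < k by apply: leq_ltn_trans ik.
  have hY : forall B : {set 'I_n}, B \subset Y -> antib r B -> #|B| <= k.-1.
    move=> B BY Ba.
    have BX' : B \subset X' by apply/subsetP => z zB; apply: YX'; exact: subsetP BY z zB.
    have Bk := A0m B BX' Ba.
    rewrite -ltnS prednK //; rewrite ltn_neqAle Bk andbT; apply/eqP => Bk'.
    have [z zB gz] := hit B BX' Ba Bk' i ik.
    have zX' := subsetP BX' z zB.
    have zM : z \in M i.
      rewrite in_set zX' gz eqxx /=; apply/existsP; exists B.
      by rewrite /MA BX' Ba Bk' eqxx zB.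
    have rz := (xsP i ik).2 z zM.
    have zK : z \in K by rewrite in_setU1 in_set zX' gz eqxx rz orbT.
    by move: (subsetP BY z zB); rewrite in_setD zK.
  have [h [hk hc]] := IH Y cY k.-1 hY.
  exists (fun x => if x \in K then k.-1 else h x); split.
    move=> x xX; case: ifP => xK.
      by apply: leq_trans km; rewrite prednK.
    have xY : x \in Y by rewrite in_setD xK xX.
    by apply: leq_trans (hk x xY) _; apply: leq_trans km; apply: leq_pred.
  move=> x y xX yX; case: ifP => xK; case: ifP => yK.
  + move=> _; case: (Kinv x xK) => [-> | [xX' gx rx]]; case: (Kinv y yK) => [-> | [yX' gy ry]].
    * by rewrite rr.
    * by rewrite (rt _ _ _ ry rxa) orbT.
    * by rewrite (rt _ _ _ rx rxa).
    * by apply: gc => //; rewrite gx gy.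
  + have yY : y \in Y by rewrite in_setD yK yX.
    by move=> e; have := hk y yY; rewrite -e ltnn.
  + have xY : x \in Y by rewrite in_setD xK xX.
    by move=> e; have := hk x xY; rewrite e ltnn.
  + have xY : x \in Y by rewrite in_setD xK xX.
    have yY : y \in Y by rewrite in_setD yK yX.
    exact: hc.
- pose B := [set xs (nat_of_ord j) | j : 'I_k].
  have xsM : forall j : 'I_k, xs j \in M j by move=> j; exact: (xsP j (ltn_ord j)).1.
  have gxs : forall j : 'I_k, g (xs j) = j by move=> j; have [_ -> _] := Minv _ _ (xsM j).
  have Bk : #|B| = k.
    rewrite card_imset ?card_ord // => j1 j2 e; apply: val_inj => /=.
    by rewrite -(gxs j1) -(gxs j2) e.
  have BX' : forall x, x \in B -> x \in X'.
    by move=> x /imsetP [j _ ->]; have [] := Minv _ _ (xsM j).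
  have aB : a \notin B.
    by apply/negP => /BX'; rewrite in_setD1 eqxx.
  have Ba : antib r (a |: B).
    apply/antibP => x y; rewrite !in_setU1 => /orP [/eqP -> | xB] /orP [/eqP -> | yB] nxy.
    + by rewrite eqxx in nxy.
    + apply/negP => ray; have yX : y \in X by rewrite (subsetP X'X) // BX'.
      by have := amax y yX ray => e; rewrite e eqxx in nxy.
    + by case/imsetP: xB => j _ ->; exact: nocase.
    + case/imsetP: xB => j1 _ ex; case/imsetP: yB => j2 _ ey; subst x y.
      move: nxy; case: (eqVneq j1 j2) => [-> | nj];  first by rewrite eqxx.
      move=> _; apply/negP => r12.
      have [_ _ [A /and3P [AX' Aa /eqP Ak] xA]] := Minv _ _ (xsM j2).
      have [z zA gz] := hit A AX' Aa Ak j1 (ltn_ord j1).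
      have zM : z \in M j1.
        rewrite in_set (subsetP AX' z zA) gz eqxx /=; apply/existsP; exists A.
        by rewrite /MA AX' Aa Ak eqxx zA.
      have rz := (xsP j1 (ltn_ord j1)).2 z zM.
      have nz : z != xs j2.
        apply/eqP => e; move: gz; rewrite e gxs => /val_inj e'.
        by rewrite e' eqxx in nj.
      by move/antibP: Aa => Aa; have := Aa z (xs j2) zA xA nz; rewrite (rt _ _ _ rz r12).
  have aBX : a |: B \subset X.
    apply/subsetP => x; rewrite in_setU1 => /orP [/eqP -> // | /BX' xX'].
    exact: subsetP X'X x xX'.
  have := hA _ aBX Ba; rewrite cardsU1 aB Bk add1n => k1m.
  exists (fun x => if x == a then k else g x); split.
    move=> x xX; case: eqP => [_ // | /eqP xa].
    have xX' : x \in X' by rewrite in_setD1 xa xX.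
    by apply: leq_trans (gk x xX') _; apply: ltnW.
  move=> x y xX yX; case: eqP => [-> | /eqP xa]; case: eqP => [-> | /eqP ya].
  + by move=> _; rewrite rr.
  + have yX' : y \in X' by rewrite in_setD1 ya yX.
    by move=> e; have := gk y yX'; rewrite -e ltnn.
  + have xX' : x \in X' by rewrite in_setD1 xa xX.
    by move=> e; have := gk x xX'; rewrite e ltnn.
  + have xX' : x \in X' by rewrite in_setD1 xa xX.
    have yX' : y \in X' by rewrite in_setD1 ya yX.
    exact: gc.
Qed.

Lemma indsum n a (c : 'I_n -> 'I_a) (i : 'I_a) :
  \sum_x ((c x == i) : nat) = #|[set x | c x == i]|.
Proof.
rewrite cardsE -sum1_card [RHS]big_mkcond /=; apply: eq_bigr => x _.
rewrite unfold_in /=; have -> : eqn (c x) i = (c x == i) by []. by case: (c x == i).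
Qed.

Definition validc n a (r : rel 'I_n) (c : {ffun 'I_n -> 'I_a}) :=
  [forall x, forall y, (c x == c y) ==> (r x y || r y x)].

Lemma sorted_coloring n a (r : rel 'I_n) (f0 : 'I_n -> 'I_a) :
  (forall x y, f0 x = f0 y -> r x y || r y x) ->
  exists c : {ffun 'I_n -> 'I_a}, (forall x y, c x = c y -> r x y || r y x) /\
    (forall i j : 'I_a, i <= j -> #|[set x | c x == j]| <= #|[set x | c x == i]|).
Proof.
move=> hf0.
pose c0 : {ffun 'I_n -> 'I_a} := [ffun x => f0 x].
have v0 : validc r c0.
  apply/forallP => x; apply/forallP => y; apply/implyP; rewrite !ffunE => /eqP.
  exact: hf0.
case: (arg_minnP (fun c : {ffun 'I_n -> 'I_a} => \sum_x (c x : nat)) v0) => c vc cmin.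
exists c; split.
  move=> x y /eqP e; move: vc => /forallP/(_ x)/forallP/(_ y)/implyP; exact.
move=> i j; rewrite leq_eqVlt => /orP [/eqP e | ij].
  by have -> : i = j by apply: val_inj.
rewrite leqNgt; apply/negP => lt.
pose c' : {ffun 'I_n -> 'I_a} := [ffun x => tperm i j (c x)].
have vc' : validc r c'.
  apply/forallP => x; apply/forallP => y; apply/implyP; rewrite !ffunE => /eqP e.
  move: vc => /forallP/(_ x)/forallP/(_ y)/implyP; apply.
  by apply/eqP; apply: perm_inj e.
have pt : forall x, (c' x : nat) + (j - i) * (c x == j) = c x + (j - i) * (c x == i).
  move=> x; rewrite ffunE.
  have nij : i != j by apply/eqP => e; move: ij; rewrite e ltnn.
  case: (eqVneq (c x) i) => [-> | ni].
    by rewrite tpermL (negbTE nij) muln0 addn0 muln1; lia.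
  case: (eqVneq (c x) j) => [-> | nj].
    rewrite tpermR muln1 muln0 addn0; lia.
  by rewrite tpermD 1?eq_sym //.
have := cmin c' vc'.
have S : \sum_x (c' x : nat) + (j - i) * #|[set x | c x == j]| =
         \sum_x (c x : nat) + (j - i) * #|[set x | c x == i]|.
  rewrite -!indsum !big_distrr -!big_split /=; apply: eq_bigr => x _; exact: pt.
have : (j - i) * #|[set x | c x == i]| < (j - i) * #|[set x | c x == j]|.
  by rewrite ltn_pmul2l // subn_gt0.
move: S; set A := \sum_x (c x : nat); set B := \sum_x (c' x : nat); set P := (j - i) * _; set Q := (j - i) * _; lia.
Qed.

Definition pre (s : nat -> nat) (i : nat) := \sum_(0 <= l < i) s l.

Lemma pre_mono s i j : i <= j -> pre s i <= pre s j.
Proof.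
move=> ij; rewrite /pre (@big_cat_nat _ _ _ i 0 j) //=; exact: leq_addr.
Qed.

Lemma preS s i : pre s i.+1 = pre s i + s i.
Proof. by rewrite /pre big_nat_recr. Qed.

Definition Uset n a (s : nat -> nat) (u : 'I_a -> nat) : {set 'I_n} :=
  [set j : 'I_n | [exists i : 'I_a, (pre s i <= j) && (j < pre s i + u i)]].

Lemma Uset_ext n a s (u v : 'I_a -> nat) : (forall i, u i = v i) ->
  Uset n s u = Uset n s v.
Proof.
move=> e; apply/setP => j; rewrite !inE; apply: eq_existsb => i; by rewrite e.
Qed.

Lemma Usub n a (s : nat -> nat) (u v : 'I_a -> nat) :
  pre s a <= n -> (forall i, u i <= s i) -> (forall i, v i <= s i) ->
  (Uset n s u \subset Uset n s v) = [forall i, u i <= v i].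
Proof.
move=> sn us vs; apply/idP/idP.
  move=> sub; apply/forallP => i; rewrite leqNgt; apply/negP => lt.
  have jn : pre s i + v i < n.
    apply: leq_trans sn; apply: leq_trans (pre_mono s (ltn_ord i)).
    rewrite preS; apply: leq_trans (_ : pre s i + u i <= _).
      by rewrite ltn_add2l.
    by rewrite leq_add2l.
  have : Ordinal jn \in Uset n s u.
    by rewrite inE; apply/existsP; exists i; rewrite /= leq_addr ltn_add2l.
  move/(subsetP sub); rewrite inE => /existsP [i' /andP [h1 h2]].
  move: h1 h2; rewrite /=.
  case: (ltngtP i' i) => [lt' | gt' | /val_inj ->].
  - move=> _ h2; have := pre_mono s lt'; rewrite preS => h3.
    have := vs i'; lia.
  - move=> h1 _; have := pre_mono s gt'; rewrite preS => h3.
    have := us i; lia.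
  - by rewrite ltnn.
move=> /forallP le; apply/subsetP => j; rewrite !inE => /existsP [i /andP [h1 h2]].
apply/existsP; exists i; rewrite h1 /=; apply: leq_trans h2 _.
by rewrite leq_add2l le.
Qed.

Definition Wset n a (s : nat -> nat) : {set {ffun 'I_a -> 'I_n.+1}} :=
  [set w : {ffun 'I_a -> 'I_n.+1} | w \in family (fun i : 'I_a => [pred k : 'I_n.+1 | k <= s i])].

Definition Fam n a (s : nat -> nat) : {set {set 'I_n}} :=
  [set Uset n s (fun i => nat_of_ord (w i)) | w : {ffun 'I_a -> 'I_n.+1} in Wset n a s].

Lemma card_small N m : #|[pred k : 'I_N | k <= m]| <= m.+1.
Proof.
rewrite cardE -(size_iota 0 m.+1) -(size_map val).
apply: uniq_leq_size.
  by rewrite map_inj_uniq ?enum_uniq //; exact: val_inj.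
move=> j /mapP [k]; rewrite mem_enum inE => km ->.
by rewrite mem_iota add0n ltnS.
Qed.

Lemma card_Fam n a s : #|Fam n a s| <= \prod_(i < a) (s i).+1.
Proof.
apply: leq_trans (leq_imset_card _ _) _.
rewrite /Wset cardsE card_family foldrE big_map big_enum /=.
by apply: leq_prod => i _; apply: card_small.
Qed.

Lemma card_bigcup_le (I : finType) (T : finType) (P : pred I) (F : I -> {set T}) :
  #|\bigcup_(i | P i) F i| <= \sum_(i | P i) #|F i|.
Proof.
apply: (big_ind2 (fun (X : {set T}) m => #|X| <= m)).
- by rewrite cards0.
- move=> X1 m1 X2 m2 h1 h2; apply: leq_trans (leq_card_setU _ _) _.
  exact: leq_add.
- by [].
Qed.

Lemma sum_nth_le (l : seq nat) a : \sum_(i < a) nth 0 l i <= sumn l.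
Proof.
elim: l a => [|x l IH] [|a] /=.
- by rewrite big_ord0.
- by rewrite big1 // => i _; rewrite nth_nil.
- by rewrite big_ord0.
- by rewrite big_ord_recl /=; rewrite leq_add2l; apply: IH.
Qed.
Import Order.TTheory GRing.Theory Num.Theory.
Local Open Scope ring_scope.

Lemma amgm (n a : nat) (s : nat -> nat) : (0 < a)%N -> (\sum_(i < a) s i <= n)%N ->
  ((\prod_(i < a) (s i).+1)%:R : rat) <= (n%:R / a%:R + 1) ^+ a.
Proof.
move=> a0 sn.
rewrite natr_prod.
have := (@leif_AGM rat 'I_a 'I_a (fun i => ((s i).+1)%:R : rat)).
rewrite /= card_ord => H.
have H1 := (H (fun i _ => ler0n _ _)).1.
apply: le_trans H1 _.
have a0' : (0 : rat) < a%:R by rewrite ltr0n.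
apply: lerXn2r.
- by rewrite nnegrE divr_ge0 // sumr_ge0 // => i _; rewrite ler0n.
- by rewrite nnegrE addr_ge0 // divr_ge0 // ler0n.
have -> : (n%:R / a%:R + 1 : rat) = (n + a)%:R / a%:R.
  by rewrite natrD mulrDl divff // gt_eqF.
rewrite ler_pM2r ?invr_gt0 // -natr_sum ler_nat.
under eq_bigr do rewrite -addn1.
rewrite big_split /= sum_nat_const card_ord muln1 leq_add2r.
exact: sn.
Qed.

Theorem lemma3p1 (n a : nat) (ha1 : (1 <= a)%N) (han : (a <= n)%N) :
  exists S : {set {set 'I_n}},
    ((#|S|)%:R : rat) <= (partition_count n)%:R * a%:R * ((n%:R / a%:R + 1) ^+ a)
    /\ forall r : rel 'I_n,
         is_poset r ->
         (forall A : {set 'I_n}, is_antichain r A -> (#|A| <= a)%N) ->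
         contains_poset S r.
Proof.
pose P k := [set t : k.-tuple 'I_n.+1 | is_partition n (map val t)].
pose sl k (t : k.-tuple 'I_n.+1) := fun i : nat => nth 0%N (map val t) i.
have Psum : forall k (t : k.-tuple 'I_n.+1), t \in P k -> (\sum_(i < a) sl k t i <= n)%N.
  move=> k t; rewrite inE => /and3P [_ _ /eqP e].
  by apply: leq_trans (sum_nth_le _ _) _; rewrite e.
exists (\bigcup_(k < n.+1) \bigcup_(t in P k) Fam n a (sl k t)).
split.
  pose B : rat := (n%:R / a%:R + 1) ^+ a.
  have h1 : (#|\bigcup_(k < n.+1) \bigcup_(t in P k) Fam n a (sl k t)| <=
      \sum_(k < n.+1) \sum_(t in P k) \prod_(i < a) (sl k t i).+1)%N.
    apply: leq_trans (card_bigcup_le _ _) _; apply: leq_sum => k _.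
    apply: leq_trans (card_bigcup_le _ _) _; apply: leq_sum => t _.
    exact: card_Fam.
  apply: le_trans (_ : _ <= (partition_count n)%:R * B) _.
    rewrite -(ler_nat rat) in h1; apply: le_trans h1 _.
    rewrite /partition_count !natr_sum big_distrl /=; apply: ler_sum => k _.
    rewrite mulr_natl -sumr_const natr_sum; apply: ler_sum => t tP.
    exact: amgm (Psum k t tP).
  have B0 : 0 <= B by rewrite exprn_ge0 // addr_ge0 // divr_ge0 // ler0n.
  rewrite mulrAC; apply: ler_peMr; first by rewrite mulr_ge0 // ler0n.
  by rewrite ler1n.
move=> r [rr [ra rt]] hw.
have hA : forall A : {set 'I_n}, A \subset setT -> antib r A -> (#|A| <= a)%N.
  move=> A _ /antibP Aa; apply: hw => x y xA yA nxy; split.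
    exact: Aa.
  by apply: Aa => //; rewrite eq_sym.
have hX : (#|[set: 'I_n]| <= n)%N by rewrite cardsT card_ord.
have [f [fa fc]] := dilworth rr ra rt hX hA.
pose f0 : 'I_n -> 'I_a := fun x => Ordinal (fa x (in_setT x)).
have f0c : forall x y, f0 x = f0 y -> r x y || r y x.
  move=> x y e; apply: fc; rewrite ?in_setT //.
  exact: (congr1 val e).
have [c [cc csort]] := sorted_coloring f0c.
pose cnt := fun i : nat => #|[set x | (c x : nat) == i]|.
have cntE : forall i : 'I_a, cnt i = #|[set x | c x == i]| by [].
have cnt_big : forall i, (a <= i)%N -> cnt i = 0%N.
  move=> i ai; apply/eqP; rewrite cards_eq0; apply/eqP/setP => x; rewrite !inE.
  by rewrite ltn_eqF // (leq_trans (ltn_ord (c x)) ai).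
have cnt_anti : forall i j, (i <= j)%N -> (cnt j <= cnt i)%N.
  move=> i j ij; case: (ltnP j a) => ja.
    have ia : (i < a)%N by apply: leq_ltn_trans ja.
    exact: (csort (Ordinal ia) (Ordinal ja) ij).
  by rewrite cnt_big.
have cnt_le_n : forall i, (cnt i <= n)%N.
  by move=> i; apply: leq_trans (max_card _) _; rewrite card_ord.
have cnt_sum : (\sum_(i < a) cnt i = n)%N.
  under eq_bigr => i _ do rewrite cntE -indsum.
  rewrite exchange_big /= -[RHS](card_ord n) -sum1_card; apply: eq_bigr => x _.
  rewrite (bigD1 (c x)) //= eqxx big1 // => i ni.
  by rewrite eq_sym (negbTE ni).
have ex0 : exists i, cnt i == 0%N by exists a; rewrite cnt_big.
case: (ex_minnP ex0) => k /eqP ck kmin.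
have ka : (k <= a)%N by apply: kmin; rewrite cnt_big.
have cpos : forall i, (i < k)%N -> (0 < cnt i)%N.
  move=> i ik; rewrite lt0n; apply/negP => /kmin; rewrite leqNgt ik //.
have czero : forall i, (k <= i)%N -> cnt i = 0%N.
  by move=> i ki; have := cnt_anti k i ki; rewrite ck leqn0 => /eqP.
pose l := map cnt (iota 0 k).
have szl : size (map (fun i => inord (cnt i) : 'I_n.+1) (iota 0 k)) == k.
  by rewrite size_map size_iota.
pose lam := Tuple szl.
have lamv : map val lam = l.
  rewrite /= -map_comp /l; apply: eq_map => i /=; rewrite inordK ?ltnS ?cnt_le_n //.
have lamP : lam \in P k.
  rewrite inE lamv; apply/and3P; split.
  - apply: (@homo_sorted _ _ cnt leq geq _ _ (iota_sorted 0 k)) => x y xy; exact: cnt_anti.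
  - apply/allP => x /mapP [i]; rewrite mem_iota add0n => /andP [_ ik] ->.
    exact: cpos.
  - rewrite sumnE big_map.
    have -> : (\sum_(i <- iota 0 k) cnt i = \sum_(0 <= i < k) cnt i)%N.
      by rewrite /index_iota subn0.
    apply/eqP; rewrite -[RHS]cnt_sum [RHS](_ : _ = \sum_(0 <= i < a) cnt i)%N; last by rewrite big_mkord.
    rewrite (@big_cat_nat _ _ _ k 0 a) //=.
    rewrite [X in _ = (_ + X)%N]big1_seq ?addn0 // => i /andP [_].
    by rewrite mem_index_iota => /andP [ki _]; exact: czero.
have slE : forall i, sl k lam i = cnt i.
  move=> i; rewrite /sl lamv /l; case: (ltnP i k) => ik.
    by rewrite (nth_map 0%N) ?size_iota // nth_iota // add0n.
  by rewrite nth_default ?size_map ?size_iota // czero.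
pose u := fun x (i : 'I_a) => #|[set y | (c y == i) && r y x]|.
have u_le : forall x i, (u x i <= sl k lam i)%N.
  move=> x i; rewrite slE cntE; apply: subset_leq_card; apply/subsetP => z.
  by rewrite !inE => /andP [].
have pre_a : (pre (sl k lam) a <= n)%N.
  by rewrite /pre big_mkord; under eq_bigr => i _ do rewrite slE; rewrite cnt_sum.
pose F := fun x => Uset n (sl k lam) (u x).
have key : forall x y, r x y = (F x \subset F y).
  move=> x y; rewrite /F Usub //; apply/idP/forallP.
    move=> rxy i; apply: subset_leq_card; apply/subsetP => z; rewrite !inE.
    by move=> /andP [-> rzx] /=; exact: rt rzx rxy.
  move=> H; apply/negPn/negP => nrxy; move: (H (c x)); apply/negP.
  rewrite -ltnNge; apply: proper_card; apply/properP; split.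
    apply/subsetP => z; rewrite !inE => /andP [cz rzy]; rewrite cz /=.
    case/orP: (cc z x (eqP cz)) => // rxz.
    by case/negP: nrxy; exact: rt rxz rzy.
  by exists x; rewrite !inE eqxx ?rr //= nrxy.
exists F; split.
- move=> x y e; apply: ra; rewrite !key e subxx //.
- move=> x; apply/bigcupP; exists (Ordinal (leq_ltn_trans ka (leq_ltn_trans han (ltnSn n)))) => //.
  apply/bigcupP; exists lam => //.
  apply/imsetP; exists [ffun i => inord (u x i) : 'I_n.+1].
    rewrite inE; apply/familyP => i; rewrite inE ffunE inordK ?u_le //.
    by rewrite ltnS (leq_trans (u_le x i)) // slE cnt_le_n.
  apply: Uset_ext => i; rewrite ffunE inordK //.
  by rewrite ltnS (leq_trans (u_le x i)) // slE cnt_le_n.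
- exact: key.
Qed.
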